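(* Let $\alpha,\beta$ be real (or complex) parameters, let $n,p$ be non-negative integers ($p\ge1$), and let $k_1,\ldots,k_p$ be non-negative integers with $k=k_1+\cdots+k_p$. Then $$\binom{k}{k_1,\ldots,k_p}\genfrac{\lfloor}{\rfloor}{0pt}{}{n}{k}^{\alpha,\beta}=\sum_{\substack{l_1+\cdots+l_p=n\\ l_i\ge0}}\binom{n}{l_1,\ldots,l_p}\genfrac{\lfloor}{\rfloor}{0pt}{}{l_1}{k_1}^{\alpha,\beta}\cdots\genfrac{\lfloor}{\rfloor}{0pt}{}{l_p}{k_p}^{\alpha,\beta}.$$
   Context: For parameters $\alpha,\beta$, the generalized Stirling numbers $\genfrac{\lfloor}{\rfloor}{0pt}{}{n}{k}^{\alpha,\beta}$, $0\le k\le n$, are defined by the polynomial identity in $x$ $$x(x+\alpha)\cdots(x+(n-1)\alpha)=\sum_{k=0}^{n}\genfrac{\lfloor}{\rfloor}{0pt}{}{n}{k}^{\alpha,\beta}\,x(x-\beta)\cdots(x-(k-1)\beta),$$ (empty products equal $1$), and $\genfrac{\lfloor}{\rfloor}{0pt}{}{n}{k}^{\alpha,\beta}=0$ for $k<0$ or $k>n$. $\binom{m}{m_1,\ldots,m_p}=\frac{m!}{m_1!\cdots m_p!}$ denotes the multinomial coefficient. *)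

(* Defs.v *)
From HB Require Import structures.
From mathcomp Require Import all_boot all_order all_algebra.
Set Implicit Arguments. Unset Strict Implicit. Unset Printing Implicit Defensive.
Import Order.TTheory GRing.Theory Num.Theory.
Local Open Scope ring_scope.

(* multinomial coefficient  m! / (m_1! ... m_p!)  (used only when sum = m) *)
Definition multinomial (m : nat) (s : seq nat) : nat :=
  (m`! %/ \prod_(x <- s) x`!)%N.

Definition rise_poly (R : nzRingType) (a : R) (n : nat) : {poly R} :=
  \prod_(i < n) ('X + (i%:R * a)%:P).
Definition fall_poly (R : nzRingType) (b : R) (k : nat) : {poly R} :=
  \prod_(j < k) ('X - (j%:R * b)%:P).

(* S is the table of generalized Stirling numbers  [n k]^{alpha,beta}:
   it vanishes for k > n and satisfies the defining polynomial identity. *)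
Definition gen_stirling (R : nzRingType) (alpha beta : R) (S : nat -> nat -> R) :=
  (forall n k, (n < k)%N -> S n k = 0) /\
  (forall n, rise_poly alpha n = \sum_(k < n.+1) S n k *: fall_poly beta k).

(* Main.v *)
Require Import Defs.
From HB Require Import structures.
From mathcomp Require Import all_boot all_order all_algebra ring lra.
Import Order.TTheory GRing.Theory Num.Theory.
Local Open Scope ring_scope.
Set Implicit Arguments. Unset Strict Implicit. Unset Printing Implicit Defensive.
Definition ff (A : comNzRingType) (b z : A) (k : nat) : A :=
  \prod_(j < k) (z - j%:R * b).
Arguments ff {A}.

Lemma ffS (A : comNzRingType) (b z : A) k : ff b z k.+1 = ff b z k * (z - k%:R * b).
Proof. by rewrite /ff big_ord_recr. Qed.

Lemma ff0 (A : comNzRingType) (b z : A) : ff b z 0 = 1.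
Proof. by rewrite /ff big_ord0. Qed.

Lemma ff_add (A : comNzRingType) (b x y : A) k :
  ff b (x + y) k = \sum_(i < k.+1) 'C(k, i)%:R * (ff b x i * ff b y (k - i)).
Proof.
elim: k => [|k IH].
  by rewrite big_ord1 !ff0 bin0 mulr1 mul1r.
rewrite ffS IH mulr_suml.
have E : forall i : 'I_k.+1, 'C(k, i)%:R * (ff b x i * ff b y (k - i)) * (x + y - k%:R * b)
   = 'C(k, i)%:R * (ff b x i.+1 * ff b y (k - i)) + 'C(k, i)%:R * (ff b x i * ff b y (k.+1 - i)).
  move=> i; have hi : (i <= k)%N by rewrite -ltnS.
  rewrite !ffS subSn // ffS natrB //; ring.
rewrite (eq_bigr _ (fun i _ => E i)) big_split /=.
rewrite [in RHS]big_ord_recl /= bin0 subn0 ff0.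
rewrite [X in _ = _ + X](eq_bigr (fun i : 'I_k.+1 => 'C(k, i)%:R * (ff b x i.+1 * ff b y (k - i))
     + 'C(k, i.+1)%:R * (ff b x i.+1 * ff b y (k - i)))); last first.
  by move=> i _; rewrite /bump /= add1n binS natrD mulrDl subSS addrC.
rewrite big_split /= addrCA; congr (_ + _).
rewrite big_ord_recl /= bin0 subn0 ff0; congr (_ + _).
rewrite big_ord_recr /= bin_small // mul0r addr0.
apply: eq_bigr => i _; by rewrite /bump /= add1n subSS.
Qed.
Lemma size_fall (R : nzRingType) (b : R) k : size (fall_poly (R:=R) b k) = k.+1.
Proof. by rewrite /fall_poly size_prod_XsubC; congr _.+1; rewrite -[RHS]card_ord cardE enumT. Qed.

Lemma monic_fall (R : nzRingType) (b : R) k : fall_poly b k \is monic.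
Proof. exact: monic_prod_XsubC. Qed.

Lemma horner_fall (R : comNzRingType) (b x : R) k : (fall_poly (R:=R) b k).[x] = ff b x k.
Proof. by rewrite /fall_poly horner_prod; apply: eq_bigr => j _; rewrite hornerXsubC. Qed.

Lemma fall_indep (R : nzRingType) (b : R) m (c : nat -> R) :
  \sum_(k < m) c k *: fall_poly b k = 0 -> forall k, (k < m)%N -> c k = 0.
Proof.
elim: m c => [|m IH] c H k hk //.
have cm : c m = 0.
  have := congr1 (fun p : {poly R} => p`_m) H.
  rewrite big_ord_recr /= coef0 coefD coefZ coef_sum.
  have -> : (fall_poly (R:=R) b m)`_m = 1.
    by have := monic_fall b m; rewrite monicE /lead_coef size_fall => /eqP.
  rewrite big1 ?add0r ?mulr1 // => i _.
  by rewrite coefZ nth_default ?mulr0 // size_fall.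
move: H; rewrite big_ord_recr /= cm scale0r addr0 => H.
rewrite leq_eqVlt in hk; case/orP: hk => [/eqP [->] //|hk].
exact: IH H k hk.
Qed.

Lemma ff_uniq (R : numFieldType) (b : R) m (c : nat -> R) :
  (forall x : R, \sum_(k < m) c k * ff b x k = 0) -> forall k, (k < m)%N -> c k = 0.
Proof.
move=> H; apply: (fall_indep (b := b)).
set P := \sum_(k < m) _.
have HP : forall x, P.[x] = 0.
  move=> x; rewrite -(H x) /P horner_sum; apply: eq_bigr => k _.
  by rewrite hornerZ horner_fall.
apply/eqP; apply: contraT => nz.
have := max_poly_roots nz (rs := [seq i%:R | i <- iota 0 (size P)]).
rewrite size_map size_iota ltnn; apply.
  by apply/allP => x /mapP [i _ ->]; rewrite /root HP.
rewrite map_inj_uniq ?iota_uniq // => i j /eqP; rewrite eqr_nat => /eqP.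
done.
Qed.
Lemma sum_widen (R : nzRingType) (F : nat -> R) k N :
  (k < N)%N -> (forall i, (k < i)%N -> F i = 0) ->
  \sum_(i < N) F i = \sum_(i < k.+1) F i.
Proof.
move=> hk H; rewrite (big_ord_widen _ _ hk) [RHS]big_mkcond /=.
apply: eq_bigr => i _; case: ifP => // /negbT; rewrite -leqNgt => hi.
exact: H.
Qed.

Lemma horner_rise (R : comNzRingType) (a x : R) n :
  (rise_poly a n).[x] = ff (-a) x n.
Proof.
rewrite /rise_poly horner_prod; apply: eq_bigr => j _.
by rewrite hornerD hornerX hornerC mulrN opprK.
Qed.

Section Main.
Variables (R : numFieldType) (alpha beta : R) (S : nat -> nat -> R).
Hypothesis hS : gen_stirling alpha beta S.

Lemma expand n N x : (n < N)%N ->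
  ff (-alpha) x n = \sum_(k < N) S n k * ff beta x k.
Proof.
move=> hn; rewrite -horner_rise hS.2 horner_sum.
rewrite (sum_widen (F := fun k => S n k * ff beta x k) hn); last first.
  by move=> i hi; rewrite hS.1 // mul0r.
by apply: eq_bigr => k _; rewrite hornerZ horner_fall.
Qed.

Lemma coefA n a N y : (n < N)%N -> (a < N)%N ->
  \sum_(k < N) S n k * 'C(k, a)%:R * ff beta y (k - a)
  = \sum_(j < n.+1) 'C(n, j)%:R * S j a * ff (-alpha) y (n - j).
Proof.
move=> hn ha; apply/eqP; rewrite -subr_eq0; apply/eqP.
pose c i := \sum_(k < N) S n k * 'C(k, i)%:R * ff beta y (k - i)
   - \sum_(j < n.+1) 'C(n, j)%:R * S j i * ff (-alpha) y (n - j).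
apply: (@ff_uniq R beta N c) ha => x.
rewrite /c; under eq_bigr do rewrite mulrBl; rewrite sumrB; apply/eqP; rewrite subr_eq0; apply/eqP.
transitivity (ff (-alpha) (x + y) n).
  rewrite (expand _ hn).
  under eq_bigr do rewrite mulr_suml.
  rewrite exchange_big /=; apply: eq_bigr => k _.
  rewrite ff_add.
  rewrite (sum_widen (k := k) (F := fun i => S n k * 'C(k, i)%:R * ff beta y (k - i) * ff beta x i)) //; last first.
    by move=> i hi; rewrite bin_small // mulr0 !mul0r.
  rewrite mulr_sumr; apply: eq_bigr => i _; ring.
rewrite ff_add.
under [in RHS]eq_bigr do rewrite mulr_suml.
rewrite [in RHS]exchange_big /=; apply: eq_bigr => j _.
rewrite (expand _ (n := j) (N := N)); last by apply: leq_ltn_trans hn; rewrite -ltnS.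
rewrite mulr_suml mulr_sumr; apply: eq_bigr => i _; ring.
Qed.

Lemma p2 n a b :
  'C(a + b, a)%:R * S n (a + b) = \sum_(j < n.+1) 'C(n, j)%:R * S j a * S (n - j) b.
Proof.
pose N := (n + a + b).+1.
have hnN : (n < N)%N by rewrite /N ltnS -addnA leq_addr.
have haN : (a < N)%N by rewrite /N ltnS addnAC leq_addl.
have hbN : (b < N)%N by rewrite /N ltnS leq_addl.
apply/eqP; rewrite -subr_eq0; apply/eqP.
pose c i := 'C(a + i, a)%:R * S n (a + i) - \sum_(j < n.+1) 'C(n, j)%:R * S j a * S (n - j) i.
apply: (@ff_uniq R beta N c) hbN => y.
rewrite /c; under eq_bigr do rewrite mulrBl; rewrite sumrB; apply/eqP; rewrite subr_eq0; apply/eqP.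
pose g k := S n k * 'C(k, a)%:R * ff beta y (k - a).
have hg : forall k, (n < k)%N -> g k = 0 by move=> k hk; rewrite /g hS.1 // !mul0r.
transitivity (\sum_(k < N) g k).
  have hnaN : (n < a + N)%N by apply: leq_trans hnN (leq_addl _ _).
  rewrite (sum_widen hnN hg) -(sum_widen hnaN hg) big_split_ord /=.
  rewrite [X in _ = X + _]big1 ?add0r; last by move=> i _; rewrite /g bin_small ?mulr0 ?mul0r.
  by apply: eq_bigr => i _; rewrite /g addKn; ring.
rewrite /g coefA //.
under [in RHS]eq_bigr do rewrite mulr_suml.
rewrite [in RHS]exchange_big /=; apply: eq_bigr => j _.
rewrite (expand _ (n := n - j) (N := N)); last by apply: leq_ltn_trans hnN; apply: leq_subr.
rewrite mulr_sumr; apply: eq_bigr => i _; ring.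
Qed.

End Main.
Section Main2.
Variables (R : numFieldType) (alpha beta : R) (S : nat -> nat -> R).
Hypothesis hS : gen_stirling alpha beta S.

Definition T m k : R := k`!%:R * S m k / m`!%:R.

Lemma fact_neq0 m : (m`!%:R : R) != 0.
Proof. by rewrite pnatr_eq0 -lt0n fact_gt0. Qed.

Lemma binfactR n j : (j <= n)%N ->
  ('C(n, j)%:R * (j`!%:R * (n - j)`!%:R) : R) = n`!%:R.
Proof. by move=> h; rewrite -!natrM bin_fact. Qed.

Lemma pT n a b : T n (a + b) = \sum_(j < n.+1) T j a * T (n - j) b.
Proof.
have E : T n (a + b) = a`!%:R * b`!%:R * ('C(a + b, a)%:R * S n (a + b)) / n`!%:R.
  rewrite /T -(binfactR (leq_addr b a)) addKn.
  by ring.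
rewrite E (p2 hS) mulr_sumr mulr_suml; apply: eq_bigr => j _.
have hj : (j <= n)%N by rewrite -ltnS.
rewrite /T -(binfactR hj).
have h1 := fact_neq0 j; have h2 := fact_neq0 (n - j).
have h3 : ('C(n, j)%:R : R) != 0 by rewrite pnatr_eq0 -lt0n bin_gt0.
by field; rewrite h1 h2 h3.
Qed.

Variable n : nat.
Definition Q k : {poly R} := \poly_(m < n.+1) T m k.

Lemma prodQ p (ks : 'I_p.+1 -> nat) m : (m <= n)%N ->
  (\prod_(i < p.+1) Q (ks i))`_m = T m (\sum_(i < p.+1) ks i).
Proof.
elim: p ks m => [|p IH] ks m hm.
  by rewrite !big_ord1 /Q coef_poly ltnS hm.
rewrite big_ord_recl [in RHS]big_ord_recl coefM pT.
apply: eq_bigr => j _.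
have hj : (j <= m)%N by rewrite -ltnS.
rewrite IH; last by apply: leq_trans (leq_subr _ _) hm.
by rewrite /Q coef_poly ltnS (leq_trans hj hm).
Qed.

Lemma coef_prodQ p (ks : 'I_p -> nat) :
  (\prod_(i < p) Q (ks i))`_n =
  \sum_(l : {ffun 'I_p -> 'I_n.+1} | (\sum_(i < p) (l i : nat) == n)%N)
      \prod_(i < p) T (l i) (ks i).
Proof.
rewrite /Q.
under eq_bigr do rewrite poly_def.
rewrite bigA_distr_bigA /= coef_sum [RHS]big_mkcond /=.
apply: eq_bigr => l _.
under eq_bigr do rewrite -mul_polyC.
rewrite big_split /= prodrXr -rmorph_prod mul_polyC coefZ coefXn eq_sym.
by case: ifP; rewrite ?mulr1 ?mulr0.
Qed.

End Main2.
Lemma prod_fact_dvd (s : seq nat) : (\prod_(x <- s) x`! %| (sumn s)`!)%N.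
Proof.
elim: s => [|x s IH] /=; first by rewrite big_nil.
rewrite big_cons -(bin_fact (leq_addr (sumn s) x)) addKn.
by apply: dvdn_mull; apply: dvdn_mul (dvdnn _) IH.
Qed.

Lemma multinomialR (R : numFieldType) m s : sumn s = m ->
  ((multinomial m s)%:R : R) = m`!%:R / (\prod_(x <- s) x`!)%:R.
Proof.
move=> <-; rewrite /multinomial natr_div ?prod_fact_dvd //.
by rewrite unitfE pnatr_eq0 -lt0n prodn_gt0 // => i; apply: fact_gt0.
Qed.

Lemma map_enum_prod q (f : 'I_q -> nat) :
  (\prod_(x <- [seq f i | i <- enum 'I_q]) x`! = \prod_(i < q) (f i)`!)%N.
Proof. by rewrite big_map big_enum. Qed.

Lemma map_enum_sum q (f : 'I_q -> nat) :
  sumn [seq f i | i <- enum 'I_q] = (\sum_(i < q) f i)%N.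
Proof. by rewrite sumnE big_map big_enum. Qed.

Theorem theorem7 (R : numFieldType) (alpha beta : R) (S : nat -> nat -> R)
  (hS : gen_stirling alpha beta S) (n p : nat) (hp : (0 < p)%N)
  (ks : 'I_p -> nat) :
  (multinomial (\sum_(i < p) ks i) [seq ks i | i <- enum 'I_p])%:R
    * S n (\sum_(i < p) ks i)
  = \sum_(l : {ffun 'I_p -> 'I_n.+1} | (\sum_(i < p) (l i : nat) == n)%N)
      (multinomial n [seq (l i : nat) | i <- enum 'I_p])%:R
        * \prod_(i < p) S (l i) (ks i).
Proof.
rewrite multinomialR ?map_enum_sum // map_enum_prod natr_prod.
set P := \prod_(i < p) (_`!)%:R.
have hP : P != 0 by rewrite /P prodf_seq_neq0; apply/allP => i _; rewrite fact_neq0.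
transitivity (n`!%:R / P * \sum_(l : {ffun 'I_p -> 'I_n.+1} | (\sum_(i < p) (l i : nat) == n)%N)
   \prod_(i < p) T S (l i) (ks i)); last first.
  rewrite mulr_sumr; apply: eq_bigr => l /eqP hl.
  rewrite multinomialR ?map_enum_sum // map_enum_prod natr_prod.
  set L := \prod_(i < p) (_`!)%:R.
  have hL : L != 0 by rewrite /L prodf_seq_neq0; apply/allP => i _; rewrite fact_neq0.
  have -> : \prod_(i < p) S (l i) (ks i) = \prod_(i < p) T S (l i) (ks i) * L / P.
    rewrite -mulrA /L /P -prodf_div -big_split /=; apply: eq_bigr => i _.
    rewrite /T; have h1 := fact_neq0 R (l i); have h2 := fact_neq0 R (ks i).
    by field; rewrite h1 h2.
  by field; rewrite hL hP.
rewrite -coef_prodQ.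
case: p ks P hP hp => // p ks P hP _.
rewrite (prodQ hS) // /T.
have h := fact_neq0 R n.
by field; rewrite h hP.
Qed.
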